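(* Assume the setting below with $k\ge2$, and suppose $\mathcal{S}$ is pseudo-symmetric. Let $(x_1,y_1)\in L$ be the point with $\varphi(x_1,y_1)=g(\mathcal{S})/2+a$. Then (a) either $y_1=0$ or $(x_1,y_1+1)\notin L$; (b) either $x_1<k$ or $(x_1+k,y_1)\notin L$; (c) either $x_1=0$, or $(x_1+1,y_1)\notin L$, or $x_1\equiv1\pmod k$.
   Context: Setting (AA-semigroups). Let $a,d,k,c$ be positive integers with $\gcd(a,a+d,\ldots,a+kd,c)=1$ and $\gcd(a,d)=1$, and let $\mathcal{S}=\langle a,a+d,\ldots,a+kd,c\rangle$ be the numerical semigroup of non-negative integer combinations of these generators; $g(\mathcal{S})$ is its Frobenius number (largest integer not in $\mathcal{S}$). $\mathcal{S}$ is pseudo-symmetric if $g(\mathcal{S})$ is even and $\mathcal{S}\cup(g(\mathcal{S})-\mathcal{S})=\mathbb{Z}\setminus\{g(\mathcal{S})/2\}$. Put $s_{-1}=a$ and let $s_0$ be the unique integer with $ds_0\equiv c\pmod a$, $0\le s_0<a$. If $s_0=0$ set $m=-1$. Otherwise define $q_{i+1},s_{i+1}$ for $i=0,1,2,\ldots$ by $s_{i-1}=q_{i+1}s_i-s_{i+1}$ with $0\le s_{i+1}<s_i$, and let $m$ be the index with $s_m>0=s_{m+1}$ (so $s_m=\gcd(a,c)$). Define $P_{-1}=0$, $P_0=1$, $P_{i+1}=q_{i+1}P_i-P_{i-1}$ for $i=0,\ldots,m$, and $R_i=\frac1a\big((a+kd)s_i-kcP_i\big)$ for $-1\le i\le m+1$;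 these are integers with $-c/s_m=R_{m+1}<R_m<\cdots<R_0<R_{-1}=a+kd$. Let $v$ be the unique integer with $R_{v+1}\le0<R_v$. Let $L=A\cup B$, where $A=\{(x,y)\in\mathbb{Z}^2:0\le x\le s_v-1,\ 0\le y\le P_{v+1}-P_v-1\}$ and $B=\{(x,y)\in\mathbb{Z}^2:0\le x\le s_v-s_{v+1}-1,\ P_{v+1}-P_v\le y\le P_{v+1}-1\}$. Define $\varphi:\mathbb{Z}^2\to\mathbb{Z}$, $\varphi(x,y)=\lceil x/k\rceil a+xd+yc$. It is known (Rødseth) that $|L|=a$ and $\varphi$ maps $L$ bijectively onto $\mathrm{Ap}(\mathcal{S};a)=\{s\in\mathcal{S}:s-a\notin\mathcal{S}\}$; consequently $g(\mathcal{S})+a=\max\varphi(L)$ is attained at $(s_v-s_{v+1}-1,P_{v+1}-1)$ or at $(s_v-1,P_{v+1}-P_v-1)$. *)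

(* Defs.v *)
From Stdlib Require Import ZArith Lia List.
Open Scope Z_scope.

Definition gens_AP (a d : Z) (k : nat) : list Z :=
  map (fun i => a + Z.of_nat i * d) (seq 0 (S k)).

Definition gcd_gens (a d k c : Z) : Z :=
  fold_right Z.gcd c (gens_AP a d (Z.to_nat k)).

Fixpoint lincomb_AP (a d : Z) (f : nat -> Z) (n : nat) : Z :=
  match n with
  | O => f O * a
  | S n' => lincomb_AP a d f n' + f n * (a + Z.of_nat n * d)
  end.

Definition inS (a d k c : Z) (n : Z) : Prop :=
  exists (f : nat -> Z) (y : Z),
    (forall i, 0 <= f i) /\ 0 <= y /\
    n = lincomb_AP a d f (Z.to_nat k) + y * c.

Definition is_frobenius (a d k c g : Z) : Prop :=
  ~ inS a d k c g /\ forall n, g < n -> inS a d k c n.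

Definition pseudo_symmetric (a d k c g : Z) : Prop :=
  Z.Even g /\
  forall z : Z, (inS a d k c z \/ inS a d k c (g - z)) <-> z <> g / 2.

(* These conditions determine s on
   [-1, m+1], q on [1, m+1] and m uniquely. *)
Definition s_q_m_spec (a d c : Z) (s q : Z -> Z) (m : Z) : Prop :=
  s (-1) = a /\
  0 <= s 0 < a /\ (a | d * s 0 - c) /\
  -1 <= m /\
  (forall i, 0 <= i <= m ->
     s (i - 1) = q (i + 1) * s i - s (i + 1) /\ 0 <= s (i + 1) < s i) /\
  s (m + 1) = 0.

Definition P_spec (q P : Z -> Z) (m : Z) : Prop :=
  P (-1) = 0 /\ P 0 = 1 /\
  (forall i, 0 <= i <= m -> P (i + 1) = q (i + 1) * P i - P (i - 1)).

(* R_i = ((a + k d) s_i - k c P_i) / a  (an exact division). *)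
Definition R (a d k c : Z) (s P : Z -> Z) (i : Z) : Z :=
  ((a + k * d) * s i - k * c * P i) / a.

Definition v_spec (a d k c : Z) (s P : Z -> Z) (m v : Z) : Prop :=
  -1 <= v <= m /\ R a d k c s P (v + 1) <= 0 /\ 0 < R a d k c s P v.

Definition inL (s P : Z -> Z) (v : Z) (x y : Z) : Prop :=
  (0 <= x <= s v - 1 /\ 0 <= y <= P (v + 1) - P v - 1) \/
  (0 <= x <= s v - s (v + 1) - 1 /\ P (v + 1) - P v <= y <= P (v + 1) - 1).

Definition ceil_div (x k : Z) : Z := - ((- x) / k).

Definition phi (a d k c : Z) (x y : Z) : Z :=
  ceil_div x k * a + x * d + y * c.

(* Main.v *)
Require Import Defs.
From Stdlib Require Import ZArith Lia Classical.
Open Scope Z_scope.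

Lemma ceil_spec x k : 0 < k -> k * ceil_div x k - k < x <= k * ceil_div x k.
Proof.
  intros Hk. unfold ceil_div.
  pose proof (Z.div_mod (-x) k ltac:(lia)) as H1.
  pose proof (Z.mod_pos_bound (-x) k Hk) as H2.
  set (w := (-x)/k) in *. set (r := (-x) mod k) in *. lia.
Qed.

Lemma ceil_unique x k u : 0 < k -> k*u - k < x <= k*u -> ceil_div x k = u.
Proof. intros Hk Hu. pose proof (ceil_spec x k Hk). set (t := ceil_div x k) in *. nia. Qed.

Lemma ceil_le x k u : 0 < k -> x <= k*u -> ceil_div x k <= u.
Proof. intros Hk Hu. pose proof (ceil_spec x k Hk). set (t := ceil_div x k) in *. nia. Qed.

Definition Lsh (sv sw Pv Pw x y : Z) : Prop :=
  (0 <= x <= sv - 1 /\ 0 <= y <= Pw - Pv - 1) \/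
  (0 <= x <= sv - sw - 1 /\ Pw - Pv <= y <= Pw - 1).

Lemma move a d k c sv sw Pv Pw Nv Nw :
  0<a -> 0<d -> 0<c -> 0<k -> 0 <= sw < sv -> 0 <= Pv < Pw -> sv*Pw - sw*Pv = a ->
  c*Pv - d*sv = Nv*a -> c*Pw - d*sw = Nw*a -> k*Nv < sv -> sw <= k*Nw ->
  forall x y, 0 <= x -> 0 <= y -> ~ Lsh sv sw Pv Pw x y ->
  exists x2 y2, 0 <= x2 /\ 0 <= y2 /\
    (Pw+Pv)*x2 + (sv+sw)*y2 + a <= (Pw+Pv)*x + (sv+sw)*y /\
    phi a d k c x2 y2 <= phi a d k c x y /\ (a | (x2-x)*d + (y2-y)*c).
Proof.
  intros Ha Hd Hc Hk Hs HP Hdet HNv HNw HRv HRw x y Hx Hy HL.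
  pose proof (ceil_spec x k Hk) as Cx.
  unfold phi.
  destruct (Z_lt_le_dec y Pw) as [Hy1|Hy1].
  - destruct (Z_lt_le_dec x sv) as [Hx1|Hx1].
    + destruct (Z_lt_le_dec y (Pw - Pv)).
      { exfalso; apply HL; left; lia. }
      destruct (Z_lt_le_dec x (sv - sw)).
      { exfalso; apply HL; right; lia. }
      exists (x - (sv - sw)), (y - (Pw - Pv)).
      assert (C1 : ceil_div (x - (sv - sw)) k <= ceil_div x k) by (apply ceil_le; lia).
      assert (ceil_div (x - (sv - sw)) k * a <= ceil_div x k * a) by (apply Z.mul_le_mono_nonneg_r; lia).
      assert (0 <= (sv - sw)*d) by nia. assert (0 <= (Pw - Pv)*c) by nia.
      split; [lia|]. split; [lia|]. split; [nia|]. split; [nia|].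
      exists (Nv - Nw). nia.
    + exists (x - sv), (y + Pv).
      assert (C1 : ceil_div (x - sv) k <= ceil_div x k - Nv) by (apply ceil_le; lia).
      assert (ceil_div (x - sv) k * a <= (ceil_div x k - Nv) * a) by (apply Z.mul_le_mono_nonneg_r; lia).
      split; [lia|]. split; [lia|]. split; [nia|]. split; [nia|].
      exists Nv. nia.
  - exists (x + sw), (y - Pw).
    pose proof (ceil_spec sw k Hk) as Cs.
    assert (C2 : ceil_div sw k <= Nw) by (apply ceil_le; lia).
    assert (C1 : ceil_div (x + sw) k <= ceil_div x k + Nw) by (apply ceil_le; lia).
    assert (ceil_div (x + sw) k * a <= (ceil_div x k + Nw) * a) by (apply Z.mul_le_mono_nonneg_r; lia).
    split; [lia|]. split; [lia|]. split; [nia|]. split; [nia|].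
    exists (-Nw). nia.
Qed.

Lemma descent a d k c sv sw Pv Pw Nv Nw :
  0<a -> 0<d -> 0<c -> 0<k -> 0 <= sw < sv -> 0 <= Pv < Pw -> sv*Pw - sw*Pv = a ->
  c*Pv - d*sv = Nv*a -> c*Pw - d*sw = Nw*a -> k*Nv < sv -> sw <= k*Nw ->
  forall n : nat, forall x y, 0 <= x -> 0 <= y ->
    (Pw+Pv)*x + (sv+sw)*y <= Z.of_nat n * a ->
    exists x' y', Lsh sv sw Pv Pw x' y' /\ phi a d k c x' y' <= phi a d k c x y /\
      (a | (x'-x)*d + (y'-y)*c).
Proof.
  intros Ha Hd Hc Hk Hs HP Hdet HNv HNw HRv HRw n.
  induction n as [|n IH]; intros x y Hx Hy Hmu;
    (destruct (classic (Lsh sv sw Pv Pw x y)) as [HL|HL];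
     [exists x, y; split; [exact HL|]; split; [lia| exists 0; ring]|]);
    destruct (move a d k c sv sw Pv Pw Nv Nw Ha Hd Hc Hk Hs HP Hdet HNv HNw HRv HRw x y Hx Hy HL)
      as [x2 [y2 [Hx2 [Hy2 [Hmu2 [Hphi2 [K HK]]]]]]].
  - assert (0 <= (Pw+Pv)*x2) by nia. assert (0 <= (sv+sw)*y2) by nia. simpl in Hmu. lia.
  - destruct (IH x2 y2 Hx2 Hy2 ltac:(rewrite Nat2Z.inj_succ in Hmu; lia))
      as [x' [y' [HL' [Hp' [K' HK']]]]].
    exists x', y'. split; [exact HL'|]. split; [lia|]. exists (K + K'). nia.
Qed.

Lemma signs sv sw Pv Pw x0 y0 x y m n :
  0 <= sw < sv -> 0 <= Pv < Pw -> Lsh sv sw Pv Pw x0 y0 -> 0 <= x -> 0 <= y ->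
  x = x0 + m*sv - n*sw -> y = y0 - m*Pv + n*Pw -> 0 <= m /\ 0 <= n.
Proof.
  intros Hs HP HL Hx Hy Ex Ey.
  assert (HL': 0 <= x0 <= sv - 1 /\ 0 <= y0 <= Pw - 1 /\
    (x0 <= sv - sw - 1 \/ y0 <= Pw - Pv - 1)) by (destruct HL; lia).
  destruct (Z_lt_le_dec m 0); destruct (Z_lt_le_dec n 0); try lia.
  - destruct (Z_lt_le_dec m n) as [|Hmn]; [| destruct (Z.eq_dec m n)].
    + assert (n*(sv-sw) <= 0) by nia. assert ((m-n)*sv <= -sv) by nia. lia.
    + subst m. assert (n*(sv-sw) <= -(sv-sw)) by nia.
      assert (n*(Pw-Pv) <= -(Pw-Pv)) by nia. lia.
    + assert (m*(Pw-Pv) <= 0) by nia. assert ((n-m)*Pw <= -Pw) by nia. lia.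
  - assert (m*sv <= -sv) by nia. assert (0 <= n*sw) by nia. lia.
  - assert (0 <= m*Pv) by nia. assert (n*Pw <= -Pw) by nia. lia.
Qed.

Lemma unique a d c sv sw Pv Pw Nv Nw x y x' y' :
  0 < a -> Z.gcd a d = 1 -> 0 <= sw < sv -> 0 <= Pv < Pw -> sv*Pw - sw*Pv = a ->
  c*Pv - d*sv = Nv*a -> c*Pw - d*sw = Nw*a ->
  Lsh sv sw Pv Pw x y -> Lsh sv sw Pv Pw x' y' -> (a | (x - x')*d + (y - y')*c) ->
  x = x' /\ y = y'.
Proof.
  intros Ha Hg Hs HP Hdet HNv HNw HL HL' [K HK].
  assert (Hm: (a | (x - x')*Pw + (y - y')*sw)).
  { apply Z.gauss with d; [| exact Hg].
    exists (Pw*K - (y-y')*Nw).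
    transitivity (Pw*((x - x')*d + (y - y')*c) - (y-y')*(c*Pw - d*sw)); [ring|].
    rewrite HK, HNw; ring. }
  assert (Hn: (a | (x - x')*Pv + (y - y')*sv)).
  { apply Z.gauss with d; [| exact Hg].
    exists (Pv*K - (y-y')*Nv).
    transitivity (Pv*((x - x')*d + (y - y')*c) - (y-y')*(c*Pv - d*sv)); [ring|].
    rewrite HK, HNv; ring. }
  destruct Hm as [m Hm]. destruct Hn as [n Hn].
  assert (E1: (m*sv - n*sw)*a = (x - x')*a).
  { transitivity ((m*a)*sv - (n*a)*sw); [ring|]. rewrite <- Hm, <- Hn.
    transitivity ((x-x')*(sv*Pw - sw*Pv)); [ring|]. rewrite Hdet. ring. }
  assert (E2: (n*Pw - m*Pv)*a = (y - y')*a).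
  { transitivity ((n*a)*Pw - (m*a)*Pv); [ring|]. rewrite <- Hm, <- Hn.
    transitivity ((y-y')*(sv*Pw - sw*Pv)); [ring|]. rewrite Hdet. ring. }
  apply Z.mul_reg_r in E1; [|lia]. apply Z.mul_reg_r in E2; [|lia].
  assert (Hxy : 0 <= x /\ 0 <= y) by (destruct HL; lia).
  assert (Hxy' : 0 <= x' /\ 0 <= y') by (destruct HL'; lia).
  destruct (signs sv sw Pv Pw x' y' x y m n Hs HP HL' ltac:(lia) ltac:(lia) ltac:(lia) ltac:(lia)).
  destruct (signs sv sw Pv Pw x y x' y' (-m) (-n) Hs HP HL ltac:(lia) ltac:(lia) ltac:(lia) ltac:(lia)).
  assert (m = 0) by lia. assert (n = 0) by lia. subst. lia.
Qed.

Lemma ap_geo a d k c sv sw Pv Pw Nv Nw x0 y0 t x y :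
  0<a -> 0<d -> 0<c -> 0<k -> 0 <= sw < sv -> 0 <= Pv < Pw -> sv*Pw - sw*Pv = a ->
  c*Pv - d*sv = Nv*a -> c*Pw - d*sw = Nw*a -> k*Nv < sv -> sw <= k*Nw ->
  Z.gcd a d = 1 ->
  Lsh sv sw Pv Pw x0 y0 -> 0 <= t -> 0 <= x <= k*t -> 0 <= y ->
  t*a + x*d + y*c = phi a d k c x0 y0 - a -> False.
Proof.
  intros Ha Hd Hc Hk Hs HP Hdet HNv HNw HRv HRw Hg HL Ht Hx Hy E.
  set (mu := (Pw+Pv)*x + (sv+sw)*y).
  assert (0 <= mu) by (unfold mu; nia).
  destruct (descent a d k c sv sw Pv Pw Nv Nw Ha Hd Hc Hk Hs HP Hdet HNv HNw HRv HRw
     (Z.to_nat mu) x y ltac:(lia) ltac:(lia) ltac:(rewrite Z2Nat.id by lia; fold mu; nia))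
    as [x' [y' [HL' [Hp [K HK]]]]].
  assert (ceil_div x k <= t) by (apply ceil_le; lia).
  assert (ceil_div x k * a <= t * a) by (apply Z.mul_le_mono_nonneg_r; lia).
  assert (Hpx : phi a d k c x y <= t*a + x*d + y*c) by (unfold phi; lia).
  assert (Hdiv : (a | (x' - x0)*d + (y' - y0)*c)).
  { exists (K + (ceil_div x0 k - 1 - t)). unfold phi in E. nia. }
  destruct (unique a d c sv sw Pv Pw Nv Nw x' y' x0 y0 Ha Hg Hs HP Hdet HNv HNw HL' HL Hdiv).
  subst. lia.
Qed.

Lemma lincomb_TX a d f (hf : forall i, 0 <= f i) n :
  exists t x, lincomb_AP a d f n = t*a + x*d /\ 0 <= t /\ 0 <= x <= Z.of_nat n * t.
Proof.
  induction n as [|n IH]; cbn [lincomb_AP].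
  - exists (f 0%nat), 0. specialize (hf 0%nat). split; [ring|]. simpl. lia.
  - destruct IH as [t [x [E [Ht Hx]]]]. rewrite E.
    exists (t + f (S n)), (x + Z.of_nat (S n) * f (S n)).
    specialize (hf (S n)). rewrite Nat2Z.inj_succ in *. split; [ring|]. split; [lia|]. nia.
Qed.

Lemma lincomb_add a d f j n :
  lincomb_AP a d (fun i => f i + (if Nat.eqb i j then 1 else 0)) n =
  lincomb_AP a d f n + (if Nat.leb j n then a + Z.of_nat j * d else 0).
Proof.
  induction n as [|n IH]; cbn [lincomb_AP]; cbv beta.
  - destruct (Nat.eqb_spec 0 j); destruct (Nat.leb_spec j 0); try lia; subst; simpl; ring.
  - rewrite IH.
    destruct (Nat.eqb_spec (S n) j); destruct (Nat.leb_spec j n);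
      destruct (Nat.leb_spec j (S n)); try lia; subst; ring.
Qed.

Lemma inS_addgen a d k c z j : inS a d k c z -> (j <= Z.to_nat k)%nat ->
  inS a d k c (z + (a + Z.of_nat j * d)).
Proof.
  intros [f [y [Hf [Hy E]]]] Hj.
  exists (fun i => f i + (if Nat.eqb i j then 1 else 0)), y.
  split; [intro i; specialize (Hf i); destruct (Nat.eqb i j); lia|].
  split; [lia|]. rewrite lincomb_add.
  destruct (Nat.leb_spec j (Z.to_nat k)); [|lia]. lia.
Qed.

Lemma inS_addc a d k c z : inS a d k c z -> inS a d k c (z + c).
Proof. intros [f [y [Hf [Hy E]]]]. exists f, (y+1). split; [auto|]. split; lia. Qed.

Lemma inS_eq a d k c z z' : inS a d k c z -> z = z' -> inS a d k c z'.
Proof. intros H ->. exact H. Qed.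

Lemma seq_facts a d c s q P m : 0 < a -> s_q_m_spec a d c s q m -> P_spec q P m ->
  forall n : nat, Z.of_nat n <= m + 1 ->
  (a | c*P (Z.of_nat n-1) - d*s (Z.of_nat n-1)) /\ (a | c*P (Z.of_nat n) - d*s (Z.of_nat n)) /\
  s (Z.of_nat n-1) * P (Z.of_nat n) - s (Z.of_nat n) * P (Z.of_nat n-1) = a /\
  P (Z.of_nat n) - P (Z.of_nat n-1) >= 1 /\ 0 <= P (Z.of_nat n-1) /\
  0 <= s (Z.of_nat n) < s (Z.of_nat n-1).
Proof.
  intros Ha [Hs1 [[Hs0a Hs0b] [Hdiv [Hm [Hrec Hsm]]]]] [HPm1 [HP0 HPrec]] n.
  induction n as [|n IH]; intros Hn.
  - change (Z.of_nat 0) with 0. replace (0-1) with (-1) by reflexivity.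
    rewrite Hs1, HPm1, HP0.
    split; [exists (-d); ring|]. split.
    { destruct Hdiv as [K HK]. exists (-K). lia. }
    split; [ring|]. lia.
  - rewrite Nat2Z.inj_succ in *. unfold Z.succ in *.
    set (i := Z.of_nat n) in *.
    assert (Hi : 0 <= i) by (unfold i; lia).
    destruct (IH ltac:(lia)) as [[K1 HK1] [[K2 HK2] [Hdet [HPd [HPn Hsi]]]]].
    replace (i + 1 - 1) with i by ring.
    destruct (Hrec i ltac:(lia)) as [Hr Hsb].
    pose proof (HPrec i ltac:(lia)) as HPr.
    set (Q := q (i+1)) in *.
    assert (Es : s (i+1) = Q * s i - s (i-1)) by lia.
    split; [exists K2; exact HK2|].
    split.
    { exists (Q*K2 - K1). rewrite Es, HPr.
      transitivity (Q*(c*P i - d*s i) - (c*P (i-1) - d*s (i-1))); [ring|].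
      rewrite HK1, HK2; ring. }
    split.
    { rewrite Es, HPr. transitivity (s (i-1) * P i - s i * P (i-1)); [ring|exact Hdet]. }
    assert (HQ : Q >= 2) by nia.
    split; [|split; lia].
    rewrite HPr. nia.
Qed.

Theorem lemma5 (a d k c : Z) (s q P : Z -> Z) (m v g x1 y1 : Z) :
  0 < a -> 0 < d -> 0 < c -> 2 <= k ->
  gcd_gens a d k c = 1 -> Z.gcd a d = 1 ->
  s_q_m_spec a d c s q m ->
  P_spec q P m ->
  v_spec a d k c s P m v ->
  is_frobenius a d k c g ->
  pseudo_symmetric a d k c g ->
  inL s P v x1 y1 ->
  phi a d k c x1 y1 = g / 2 + a ->
  (y1 = 0 \/ ~ inL s P v x1 (y1 + 1)) /\
  (x1 < k \/ ~ inL s P v (x1 + k) y1) /\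
  (x1 = 0 \/ ~ inL s P v (x1 + 1) y1 \/ x1 mod k = 1 mod k).
Proof.
  intros Ha Hd Hc Hk Hgcd Hgad Hsq HPs Hv Hfrob Hps HL Hphi.
  assert (Hk0 : 0 < k) by lia.
  destruct Hv as [Hvr [HRw HRv]].
  pose proof (proj1 (proj2 (proj2 (proj2 Hsq)))) as Hm.
  destruct (seq_facts a d c s q P m Ha Hsq HPs (Z.to_nat (v+1)) ltac:(lia))
    as [[Nv HNv] [[Nw HNw] [Hdet [HPd [HPn Hsi]]]]].
  rewrite Z2Nat.id in HNv, HNw, Hdet, HPd, HPn, Hsi by lia.
  replace (v + 1 - 1) with v in * by ring.
  unfold R in HRw, HRv.
  assert (E1 : (a + k*d)*s v - k*c*P v = (s v - k*Nv)*a).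
  { transitivity (a*s v - k*(c*P v - d*s v)); [ring|]. rewrite HNv; ring. }
  assert (E2 : (a + k*d)*s (v+1) - k*c*P (v+1) = (s (v+1) - k*Nw)*a).
  { transitivity (a*s (v+1) - k*(c*P (v+1) - d*s (v+1))); [ring|]. rewrite HNw; ring. }
  rewrite E1, Z.div_mul in HRv by lia. rewrite E2, Z.div_mul in HRw by lia.
  assert (AP : forall x0 y0, inL s P v x0 y0 -> ~ inS a d k c (phi a d k c x0 y0 - a)).
  { intros x0 y0 HL0 [f [y [Hf [Hy E]]]].
    destruct (lincomb_TX a d f Hf (Z.to_nat k)) as [t [x [Et [Ht Hx]]]].
    rewrite Z2Nat.id in Hx by lia.
    apply (ap_geo a d k c (s v) (s (v+1)) (P v) (P (v+1)) Nv Nw x0 y0 t x y); try lia.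
    exact HL0. }
  destruct Hps as [[h Hh] Hps].
  assert (Eh : g / 2 = h) by (rewrite Hh, Z.mul_comm, Z.div_mul; lia).
  rewrite Eh in Hphi, Hps.
  assert (NSh : ~ inS a d k c h) by (intro H; apply (proj1 (Hps h)); auto).
  assert (OT : forall z, z <> h -> inS a d k c z \/ inS a d k c (h - (z - h))).
  { intros z Hz. destruct (proj2 (Hps z) Hz) as [H|H]; [left; exact H|right].
    apply (inS_eq _ _ _ _ _ _ H). lia. }
  assert (Hx1 : 0 <= x1) by (destruct HL; lia).
  pose proof (ceil_spec x1 k Hk0) as Cx.
  split; [|split].
  - right. intro HL2. apply (AP _ _ HL2).
    destruct (OT (h + c) ltac:(lia)) as [H|H].
    + apply (inS_eq _ _ _ _ _ _ H). unfold phi in *. lia.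
    + exfalso. apply NSh. apply (inS_eq _ _ _ _ _ _ (inS_addc _ _ _ _ _ H)). lia.
  - right. intro HL2. apply (AP _ _ HL2).
    assert (C : ceil_div (x1 + k) k = ceil_div x1 k + 1) by (apply ceil_unique; lia).
    destruct (OT (h + a + k*d) ltac:(nia)) as [H|H].
    + apply (inS_eq _ _ _ _ _ _ H). unfold phi in *. rewrite C. lia.
    + exfalso. apply NSh.
      apply (inS_eq _ _ _ _ _ _ (inS_addgen _ _ _ _ _ (Z.to_nat k) H ltac:(lia))).
      rewrite Z2Nat.id by lia. lia.
  - destruct (Z.eq_dec x1 0) as [|Hx10]; [left; assumption|].
    pose proof (Z.div_mod x1 k ltac:(lia)) as Dm.
    pose proof (Z.mod_pos_bound x1 k Hk0) as Mb.
    set (q0 := x1 / k) in *. set (r := x1 mod k) in *.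
    destruct (Z.eq_dec r 1) as [Hr1|Hr1].
    { right; right. rewrite Hr1, Z.mod_small; lia. }
    right; left. intro HL2.
    destruct (Z.eq_dec r 0) as [Hr0|Hr0].
    + apply (AP _ _ HL2).
      assert (C0 : ceil_div x1 k = q0) by (apply ceil_unique; lia).
      assert (C1 : ceil_div (x1 + 1) k = q0 + 1) by (apply ceil_unique; lia).
      destruct (OT (h + a + d) ltac:(lia)) as [H|H].
      * apply (inS_eq _ _ _ _ _ _ H). unfold phi in *. rewrite C0 in Hphi. rewrite C1. lia.
      * exfalso. apply NSh.
        apply (inS_eq _ _ _ _ _ _ (inS_addgen _ _ _ _ _ 1 H ltac:(change 1%nat with (Z.to_nat 1); apply Z2Nat.inj_le; lia))). change (Z.of_nat 1) with 1. lia.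
    + assert (C0 : ceil_div x1 k = q0 + 1) by (apply ceil_unique; lia).
      assert (C1 : ceil_div (x1 + 1) k = q0 + 1) by (apply ceil_unique; lia).
      assert (C2 : ceil_div (x1 - 1) k = q0 + 1) by (apply ceil_unique; lia).
      assert (HL3 : inL s P v (x1 - 1) y1) by (unfold inL in *; lia).
      pose proof (AP _ _ HL2) as A2. pose proof (AP _ _ HL3) as A3.
      unfold phi in *. rewrite C0 in Hphi. rewrite C1 in A2. rewrite C2 in A3.
      destruct (OT (h + d) ltac:(lia)) as [H|H].
      * apply A2. apply (inS_eq _ _ _ _ _ _ H). lia.
      * apply A3. apply (inS_eq _ _ _ _ _ _ H). lia.
Qed.
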